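(* Let $V$ be an oriented $4$-dimensional real inner product space with an oriented orthonormal basis $f^1,\dots,f^4$ of $V^*$ and dual basis $f_1,\dots,f_4$ of $V$, let $\omega_1=f^1\wedge f^2+f^3\wedge f^4$, $\omega_2=f^1\wedge f^3+f^4\wedge f^2$, $\omega_3=f^1\wedge f^4+f^2\wedge f^3$, and let $e_1,e_2,e_3$ be the standard basis of $\mathbb{R}^3$. Consider the linear map $C:V\otimes V^*\otimes\mathbb{R}^3\to V^*\otimes V^*\otimes\Lambda^2\mathbb{R}^3$, $$C:\ s^{pk}_qf_p\otimes f^q\otimes e_k\longmapsto\sum_{j=1}^3s^{pk}_q(f_p\lrcorner\omega_j)\otimes f^q\otimes(e_k\wedge e_j)$$ (summation over repeated indices), where $f_p\lrcorner\omega_j\in V^*$ is the interior product. Then $C$ is an isomorphism.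
   Context: $\omega_1,\omega_2,\omega_3$ are the standard hyperkähler (self-dual) $2$-forms on $V$. *)

(* Defs.v *)
From HB Require Import structures.
From mathcomp Require Import all_boot all_order all_algebra.
From mathcomp Require Import reals.
Set Implicit Arguments. Unset Strict Implicit. Unset Printing Implicit Defensive.
Import Order.TTheory GRing.Theory Num.Theory.
Local Open Scope ring_scope.

(* Coordinates: V = R^4 with the oriented orthonormal basis f_1..f_4 (indices
   0..3 here), dual basis f^1..f^4 of V^*; R^3 with standard basis e_1,e_2,e_3
   (indices 0..2). *)

(* A 2-form on V is represented by its (antisymmetric) matrix of values
   w(f_a, f_b).  (f^i /\ f^j)(f_a,f_b) = [a=i][b=j] - [a=j][b=i]. *)
Definition wedge2 (R : nzRingType) (i j : 'I_4) : 'M[R]_4 :=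
  \matrix_(a < 4, b < 4) (((a == i) && (b == j))%:R - ((a == j) && (b == i))%:R).

Definition omega (R : nzRingType) (j : 'I_3) : 'M[R]_4 :=
  match val j with
  | 0 => wedge2 R 0 1 + wedge2 R 2 3
  | 1 => wedge2 R 0 2 + wedge2 R 3 1
  | _ => wedge2 R 0 3 + wedge2 R 1 2
  end.

Definition interior (R : nzRingType) (p : 'I_4) (w : 'M[R]_4) (r : 'I_4) : R :=
  w p r.

(* Basis of Lambda^2 R^3: e_a /\ e_b with a < b. *)
Definition L2idx := {ab : 'I_3 * 'I_3 | (ab.1 < ab.2)%N}.

(* Coefficient of e_a/\e_b (a<b) in e_k /\ e_j. *)
Definition wedgecoef (R : nzRingType) (k j : 'I_3) (ab : L2idx) : R :=
  ((k == (val ab).1) && (j == (val ab).2))%:R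
  - ((k == (val ab).2) && (j == (val ab).1))%:R.

(* Domain V (x) V^* (x) R^3 : s = s^{pk}_q f_p (x) f^q (x) e_k,
   coefficient s (p, q, k).
   Codomain V^* (x) V^* (x) Lambda^2 R^3 : coefficient t (r, q, ab) of
   f^r (x) f^q (x) (e_a /\ e_b). *)
Notation domT R := {ffun 'I_4 * 'I_4 * 'I_3 -> R}.
Notation codT R := {ffun 'I_4 * 'I_4 * L2idx -> R}.

Definition Cmap (R : nzRingType) (s : domT R) : codT R :=
  [ffun x : 'I_4 * 'I_4 * L2idx =>
     let: (r, q, ab) := x in
     \sum_(p < 4) \sum_(k < 3) \sum_(j < 3)
        s (p, q, k) * interior p (omega R j) r * wedgecoef R k j ab].

(* Main.v *)
Require Import Defs.
From HB Require Import structures.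
From mathcomp Require Import all_boot all_order all_algebra.
From mathcomp Require Import reals ring lra.
Import GRing.Theory Num.Theory.
Local Open Scope ring_scope.

Definition o4 (n : nat) (H : (n < 4)%N) : 'I_4 := Ordinal H.
Definition ab0 : L2idx := exist _ (@Ordinal 3 0 isT, @Ordinal 3 1 isT) isT.
Definition ab1 : L2idx := exist _ (@Ordinal 3 0 isT, @Ordinal 3 2 isT) isT.
Definition ab2 : L2idx := exist _ (@Ordinal 3 1 isT, @Ordinal 3 2 isT) isT.

Definition Cinv {R : realType} (t : codT R) : domT R :=
  [ffun x : 'I_4 * 'I_4 * 'I_3 =>
    let: (p, q, k) := x in
    let T r ab := t (r, q, ab) in
    let r0 := @Ordinal 4 0 isT in let r1 := @Ordinal 4 1 isT in
    let r2 := @Ordinal 4 2 isT in let r3 := @Ordinal 4 3 isT in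
    match val p, val k with
    | 0, 0 => (T r0 ab2 + T r2 ab0 + T r3 ab1) / 2
    | 0, 1 => (- T r0 ab1 - T r1 ab0 + T r3 ab2) / 2
    | 0, _ => (T r0 ab0 - T r1 ab1 - T r2 ab2) / 2
    | 1, 0 => (T r1 ab2 + T r2 ab1 - T r3 ab0) / 2
    | 1, 1 => (T r0 ab0 - T r1 ab1 + T r2 ab2) / 2
    | 1, _ => (T r0 ab1 + T r1 ab0 + T r3 ab2) / 2
    | 2, 0 => (- T r0 ab0 - T r1 ab1 + T r2 ab2) / 2
    | 2, 1 => (- T r1 ab2 - T r2 ab1 - T r3 ab0) / 2
    | 2, _ => (T r0 ab2 + T r2 ab0 - T r3 ab1) / 2
    | _, 0 => (- T r0 ab1 + T r1 ab0 + T r3 ab2) / 2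
    | _, 1 => (- T r0 ab2 + T r2 ab0 - T r3 ab1) / 2
    | _, _ => (- T r1 ab2 + T r2 ab1 + T r3 ab0) / 2
    end].

Lemma lin (R : realType) (a : R) (x y : domT R) :
      Cmap [ffun i => a * x i + y i] = [ffun o => a * Cmap x o + Cmap y o].
Proof.
apply/ffunP => -[[r q] ab]; rewrite !ffunE.
rewrite !big_ord_recr !big_ord0 /= !ffunE; ring.
Qed.


Definition om {R : realType} (j p r : nat) : R :=
  match j, p, r with
  | 0, 0, 1 => 1 | 0, 1, 0 => -1 | 0, 2, 3 => 1 | 0, 3, 2 => -1
  | 1, 0, 2 => 1 | 1, 2, 0 => -1 | 1, 3, 1 => 1 | 1, 1, 3 => -1
  | 2, 0, 3 => 1 | 2, 3, 0 => -1 | 2, 1, 2 => 1 | 2, 2, 1 => -1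
  | _, _, _ => 0 end.

Lemma omE (R : realType) (j : 'I_3) (p r : 'I_4) :
  interior p (omega R j) r = om (val j) (val p) (val r).
Proof.
case: j => [[|[|[|j]]] Hj] //; case: p => [[|[|[|[|p]]]] Hp] //;
case: r => [[|[|[|[|r]]]] Hr] //; rewrite /interior /omega /= !mxE /=;
rewrite ?(mulr1n, mulr0n, subr0, sub0r, addr0, add0r, oppr0) //.
Qed.

Lemma sum3 (R : realType) (F : 'I_3 -> R) :
  \sum_(i < 3) F i = F (@Ordinal 3 0 isT) + F (@Ordinal 3 1 isT) + F (@Ordinal 3 2 isT).
Proof.
rewrite !big_ord_recr big_ord0 /= add0r.
by congr (_ + _ + _); congr F; apply: val_inj.
Qed.

Lemma sum4 (R : realType) (F : 'I_4 -> R) :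
  \sum_(i < 4) F i = F (@Ordinal 4 0 isT) + F (@Ordinal 4 1 isT) + F (@Ordinal 4 2 isT)
   + F (@Ordinal 4 3 isT).
Proof.
rewrite !big_ord_recr big_ord0 /= add0r.
by congr (_ + _ + _ + _); congr F; apply: val_inj.
Qed.

Lemma CmapE (R : realType) (s : domT R) r q (a b : 'I_3) (h : (a < b)%N) :
  Cmap s (r, q, exist _ (a, b) h) =
  \sum_(p < 4) (s (p, q, a) * om (val b) (val p) (val r)
               - s (p, q, b) * om (val a) (val p) (val r)).
Proof.
rewrite ffunE; apply: eq_bigr => p _.
rewrite !sum3 !omE.
case: a h => [[|[|[|a]]] Ha] //; case: b => [[|[|[|b]]] Hb] //= h;
rewrite /wedgecoef /= ?(bool_irrelevance Ha isT) ?(bool_irrelevance Hb isT);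
rewrite ?(mulr1n, mulr0n, subr0, sub0r, addr0, add0r, oppr0, mulr0, mulr1) //;
ring.
Qed.

Lemma inv1 (R : realType) (s : domT R) : Cinv (Cmap s) = s.
Proof.
apply/ffunP => -[[p q] k]; rewrite ffunE.
case: p => [[|[|[|[|p]]]] Hp] //; case: k => [[|[|[|k]]] Hk] //;
rewrite (bool_irrelevance Hp isT) (bool_irrelevance Hk isT) /= /ab0 /ab1 /ab2 !CmapE !sum4 /=;
lra.
Qed.

Lemma inv2 (R : realType) (t : codT R) : Cmap (Cinv t) = t.
Proof.
apply/ffunP => -[[r q] [[a b] h]]; rewrite CmapE sum4 !ffunE /=.
case: r => [[|[|[|[|r]]]] Hr] //; case: a h => [[|[|[|a]]] Ha] //; case: b => [[|[|[|b]]] Hb] //= h;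
rewrite (bool_irrelevance Hr isT) (bool_irrelevance Ha isT) (bool_irrelevance Hb isT)
  (bool_irrelevance h isT) /ab0 /ab1 /ab2 /=; lra.
Qed.

Theorem propositionA3 (R : realType) :
  (forall (a : R) (x y : domT R),
      Cmap [ffun i => a * x i + y i] = [ffun o => a * Cmap x o + Cmap y o])
  /\ bijective (@Cmap R).
Proof.
split; first exact: lin.
by exists Cinv; [exact: inv1 | exact: inv2].
Qed.
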